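(* There is a constant $c>0$ such that for all sufficiently large $n$ and every $\sigma\in[0,1]$, \[\min_x\left\{\frac{\binom{1-\sigma/2}{x-\sigma/2}_n+\binom{1-(1-\sigma)/2}{x}_n}{\binom{1/2}{x-\sigma/2}_n}\right\}\ \le\ 2^{n(1-h(1/4))}\,n^{c},\] where the minimum is over real $x$ with $0\le x-\sigma/2\le 1/2$ and $0\le x\le 1-(1-\sigma)/2$.
   Context: For reals $a\ge b\ge 0$, $\binom{a}{b}_n$ denotes the binomial coefficient $\binom{\lfloor an\rfloor}{\lfloor bn\rfloor}$. $h(x)=-x\log_2x-(1-x)\log_2(1-x)$ (with $h(0)=h(1)=0$) is the binary entropy function. *)

(* Defs.v *)
From Stdlib Require Import Reals Lra Lia ZArith.
Open Scope R_scope.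

(* floor of a real, as a natural number (used only on nonnegative arguments) *)
Definition nfloor (r : R) : nat := Z.to_nat (Int_part r).

(* binom(a,b)_n := binom(floor(a n), floor(b n)); Stdlib's real-valued C n k.
   In all uses below 0 <= b <= a, so floor(b n) <= floor(a n). *)
Definition binomn (a b : R) (n : nat) : R :=
  C (nfloor (a * INR n)) (nfloor (b * INR n)).

Definition log2 (x : R) : R := ln x / ln 2.

Definition h (x : R) : R :=
  if Req_EM_T x 0 then 0 else if Req_EM_T x 1 then 0
  else - x * log2 x - (1 - x) * log2 (1 - x).

(* Main.v *)
Require Import Defs.
From Stdlib Require Import Reals Lra Lia Factorial ZArith.
From Coquelicot Require Import Coquelicot.
Open Scope R_scope.

Definition L (z : R) : R := z * ln z.
Definition kk : R := ln (3/2) / ln 2.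
Definition yy (s : R) : R := 1/4 + kk/2*(s - 1/2).
Definition Psi (s : R) : R := L ((1+s)/2) - L (yy s + s/2) + L (yy s) - L (1/2).
Definition Psi1 (s : R) : R :=
  1/2*ln((1+s)/2) - (1+kk)/2*ln(yy s + s/2) + kk/2*ln(yy s).
Definition Psi2 (s : R) : R :=
  1/(2*(1+s)) - (1+kk)^2/(4*(yy s + s/2)) + kk^2/(4*yy s).
Definition K0 : R := 3/4 * ln 3 - ln 2.

Lemma ln2_pos : 0 < ln 2.
Proof. pose proof ln_lt_2; lra. Qed.

Lemma kk_bounds : 1/2 <= kk <= 2/3.
Proof.
  unfold kk. pose proof ln2_pos.
  assert (H1: ln (9/4) = 2 * ln (3/2)).
  { replace (9/4) with (3/2*(3/2)) by lra. rewrite ln_mult; lra. }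
  assert (H2: ln (27/8) = 3 * ln (3/2)).
  { replace (27/8) with (3/2*(3/2)*(3/2)) by lra. rewrite !ln_mult; try lra. }
  assert (H3: ln 4 = 2 * ln 2).
  { replace 4 with (2*2) by lra. rewrite ln_mult; lra. }
  assert (ln 2 <= ln (9/4)) by (apply ln_le; lra).
  assert (ln (27/8) <= ln 4) by (apply ln_le; lra).
  split.
  - apply Rmult_le_reg_r with (ln 2); auto. unfold Rdiv at 2. rewrite Rmult_assoc, Rinv_l; lra.
  - apply Rmult_le_reg_r with (ln 2); auto. unfold Rdiv at 1. rewrite Rmult_assoc, Rinv_l; lra.
Qed.

Lemma kk_eq : kk * ln 2 = ln (3/2).
Proof. unfold kk. pose proof ln2_pos. field. lra. Qed.

Lemma yy_pos s : -1/20 <= s <= 21/20 -> 0 < yy s /\ 0 < yy s + s/2 /\ 0 < (1+s)/2.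
Proof. pose proof kk_bounds. unfold yy. intros.
  assert (kk*(s-1/2) >= -(2/3)*(55/100)).
  { destruct (Rle_dec s (1/2)). nra. nra. }
  assert (kk*(s-1/2) <= (2/3)*(55/100)).
  { destruct (Rle_dec s (1/2)). nra. nra. }
  split; [|split]; lra. Qed.

Lemma Psi_deriv s : -1/20 <= s <= 21/20 -> is_derive Psi s (Psi1 s).
Proof.
  intros Hs. destruct (yy_pos s Hs) as (A&B&D).
  unfold Psi, Psi1, L. unfold yy in *.
  auto_derive.
  - repeat split; lra.
  - unfold Rminus, Rdiv in *. field. repeat split; lra.
Qed.

Lemma Psi1_deriv s : -1/20 <= s <= 21/20 -> is_derive Psi1 s (Psi2 s).
Proof.
  intros Hs. destruct (yy_pos s Hs) as (A&B&D).
  unfold Psi1, Psi2. unfold yy in *.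
  auto_derive.
  - repeat split; lra.
  - field. repeat split; lra.
Qed.

Lemma Psi2_neg s : 0 <= s <= 1 -> Psi2 s <= 0.
Proof.
  intros Hs. pose proof kk_bounds. destruct (yy_pos s) as (A&B&D); [lra|].
  unfold Psi2.
  set (y := yy s) in *.
  assert (Hy : y = 1/4 + kk/2*(s-1/2)) by reflexivity.
  assert (E: 2*y*(y+s/2)-(1+kk)^2*(1+s)*y+kk^2*(1+s)*(y+s/2) <= 0).
  { rewrite Hy. nra. }
  assert (E2: 1/(2*(1+s)) - (1+kk)^2/(4*(y + s/2)) + kk^2/(4*y)
     = (2*y*(y+s/2)-(1+kk)^2*(1+s)*y+kk^2*(1+s)*(y+s/2)) / (4*(1+s)*(y+s/2)*y)).
  { field. repeat split; lra. }
  rewrite E2. apply Rmult_le_0_r. lra. left. apply Rinv_0_lt_compat.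
  apply Rmult_lt_0_compat; [apply Rmult_lt_0_compat|]; lra.
Qed.

Lemma ln_half : ln (1/2) = - ln 2.
Proof. replace (1/2) with (/2) by lra. apply ln_Rinv; lra. Qed.
Lemma ln_quarter : ln (1/4) = - 2 * ln 2.
Proof. replace (1/4) with (/2 * /2) by lra. rewrite ln_mult; try lra.
  replace (/2) with (1/2) by lra. rewrite ln_half. lra. Qed.
Lemma ln_3q : ln (3/4) = ln 3 - 2 * ln 2.
Proof. replace (3/4) with (3 * (1/4)) by lra. rewrite ln_mult; try lra.
  rewrite ln_quarter. lra. Qed.
Lemma ln_32 : ln (3/2) = ln 3 - ln 2.
Proof. replace (3/2) with (3 * (1/2)) by lra. rewrite ln_mult; try lra.
  rewrite ln_half. lra. Qed.

Lemma Psi1_half : Psi1 (1/2) = 0.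
Proof.
  unfold Psi1, yy.
  replace ((1 + 1/2)/2) with (3/4) by lra.
  replace (1 / 4 + kk / 2 * (1 / 2 - 1 / 2) + 1 / 2 / 2) with (1/2) by lra.
  replace (1 / 4 + kk / 2 * (1 / 2 - 1 / 2)) with (1/4) by lra.
  rewrite ln_3q, ln_half, ln_quarter.
  pose proof kk_eq. rewrite ln_32 in H. lra.
Qed.

Lemma Psi_half : Psi (1/2) = K0.
Proof.
  unfold Psi, yy, L, K0.
  replace ((1 + 1/2)/2) with (3/4) by lra.
  replace (1 / 4 + kk / 2 * (1 / 2 - 1 / 2) + 1 / 2 / 2) with (1/2) by lra.
  replace (1 / 4 + kk / 2 * (1 / 2 - 1 / 2)) with (1/4) by lra.
  rewrite ln_3q, ln_half, ln_quarter. lra.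
Qed.

Lemma Psi1_sign s : 0 <= s <= 1 -> (s <= 1/2 -> 0 <= Psi1 s) /\ (1/2 <= s -> Psi1 s <= 0).
Proof.
  intros Hs. split; intros Hs2.
  - destruct (Req_dec s (1/2)) as [->|Hne]; [rewrite Psi1_half; lra|].
    destruct (MVT_cor2 Psi1 Psi2 s (1/2)) as (c & Hc & Hc2); [lra| |].
    { intros c Hc. apply is_derive_Reals, Psi1_deriv. lra. }
    rewrite Psi1_half in Hc. pose proof (Psi2_neg c ltac:(lra)). nra.
  - destruct (Req_dec s (1/2)) as [->|Hne]; [rewrite Psi1_half; lra|].
    destruct (MVT_cor2 Psi1 Psi2 (1/2) s) as (c & Hc & Hc2); [lra| |].
    { intros c Hc. apply is_derive_Reals, Psi1_deriv. lra. }
    rewrite Psi1_half in Hc. pose proof (Psi2_neg c ltac:(lra)). nra.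
Qed.

Lemma Psi_le s : 0 <= s <= 1 -> Psi s <= K0.
Proof.
  intros Hs. rewrite <- Psi_half.
  destruct (Req_dec s (1/2)) as [->|Hne]; [lra|].
  destruct (Rle_dec s (1/2)).
  - destruct (MVT_cor2 Psi Psi1 s (1/2)) as (c & Hc & Hc2); [lra| |].
    { intros c Hc. apply is_derive_Reals, Psi_deriv. lra. }
    pose proof (proj1 (Psi1_sign c ltac:(lra)) ltac:(lra)). nra.
  - destruct (MVT_cor2 Psi Psi1 (1/2) s) as (c & Hc & Hc2); [lra| |].
    { intros c Hc. apply is_derive_Reals, Psi_deriv. lra. }
    pose proof (proj2 (Psi1_sign c ltac:(lra)) ltac:(lra)). nra.
Qed.

Lemma fact_pos n : 0 < INR (fact n).
Proof. apply lt_0_INR. apply lt_O_fact. Qed.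

Lemma C_pos N k : 0 < Binomial.C N k.
Proof.
  unfold Binomial.C. apply Rdiv_lt_0_compat. apply fact_pos.
  apply Rmult_lt_0_compat; apply fact_pos.
Qed.

Lemma C_ratio N i : (i < N)%nat ->
  Binomial.C N (S i) * INR (S i) = Binomial.C N i * INR (N - i).
Proof.
  intros H. unfold Binomial.C.
  replace (N - i)%nat with (S (N - S i)) by lia.
  rewrite !fact_simpl. rewrite !mult_INR.
  pose proof (fact_pos i). pose proof (fact_pos (N - S i)).
  assert (0 < INR (S i)) by (apply lt_0_INR; lia).
  assert (0 < INR (S (N - S i))) by (apply lt_0_INR; lia).
  field. repeat split; lra.
Qed.

Definition Tb N k i := Binomial.C N i * INR k ^ i * INR (N - k) ^ (N - i).

Lemma T_nonneg N k i : 0 <= Tb N k i.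
Proof.
  unfold Tb. pose proof (C_pos N i). pose proof (pos_INR k). pose proof (pos_INR (N-k)).
  apply Rmult_le_pos. apply Rmult_le_pos. lra. apply pow_le; lra. apply pow_le; lra.
Qed.

Lemma T_step N k i : (i < N)%nat ->
  Tb N k (S i) * (INR (S i) * INR (N - k)) = Tb N k i * (INR (N - i) * INR k).
Proof.
  intros H. unfold Tb.
  assert (Hz: INR (N - k) ^ (N - i) = INR (N - k) * INR (N - k) ^ (N - S i)).
  { replace (N - i)%nat with (S (N - S i)) by lia. reflexivity. }
  rewrite Hz. simpl pow.
  transitivity (Binomial.C N (S i) * INR (S i) * (INR k * INR k ^ i * INR (N - k) * INR (N - k) ^ (N - S i))).
  ring. rewrite C_ratio by auto. ring.
Qed.

Lemma T_up N k i : (i < k)%nat -> (k <= N)%nat -> Tb N k i <= Tb N k (S i).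
Proof.
  intros H1 H2. destruct (Nat.eq_dec k N) as [->|Hne].
  - unfold Tb. replace (N - N)%nat with 0%nat by lia.
    replace (N - i)%nat with (S (N - S i)) by lia. simpl pow at 2. rewrite Rmult_0_l, Rmult_0_r.
    pose proof (T_nonneg N N (S i)). unfold Tb in H. replace (N-N)%nat with 0%nat in H by lia. lra.
  - pose proof (T_step N k i ltac:(lia)) as E.
    assert (HP : 0 < INR (S i) * INR (N - k)).
    { apply Rmult_lt_0_compat; apply lt_0_INR; lia. }
    assert (HQ : INR (S i) * INR (N - k) <= INR (N - i) * INR k).
    { rewrite <- !mult_INR. apply le_INR. nia. }
    pose proof (T_nonneg N k i). pose proof (T_nonneg N k (S i)). nra.
Qed.

Lemma T_down N k i : (k <= i)%nat -> (i < N)%nat -> Tb N k (S i) <= Tb N k i.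
Proof.
  intros H1 H2.
  pose proof (T_step N k i ltac:(lia)) as E.
  assert (HP : 0 < INR (S i) * INR (N - k)).
  { apply Rmult_lt_0_compat; apply lt_0_INR; lia. }
  assert (HQ : INR (N - i) * INR k <= INR (S i) * INR (N - k)).
  { rewrite <- !mult_INR. apply le_INR. nia. }
  pose proof (T_nonneg N k i). pose proof (T_nonneg N k (S i)). nra.
Qed.

Lemma T_max N k i : (k <= N)%nat -> (i <= N)%nat -> Tb N k i <= Tb N k k.
Proof.
  intros Hk Hi. destruct (Compare_dec.le_lt_dec i k) as [H|H].
  - remember (k - i)%nat as d. revert i H Heqd Hi. induction d; intros i H Heqd Hi.
    + replace i with k by lia. lra.
    + apply Rle_trans with (Tb N k (S i)). apply T_up; lia.
      apply IHd; lia.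
  - remember (i - k)%nat as d. revert i H Heqd Hi. induction d; intros i H Heqd Hi.
    + lia.
    + destruct i as [|i]; [lia|].
      apply Rle_trans with (Tb N k i). apply T_down; lia.
      destruct (Nat.eq_dec i k) as [->|Hne]; [lra|]. apply IHd; lia.
Qed.

Lemma sum_le_single (f : nat -> R) n i : (forall j, 0 <= f j) -> (i <= n)%nat -> f i <= sum_f_R0 f n.
Proof.
  intros Hf Hi. induction n.
  - replace i with 0%nat by lia. simpl. lra.
  - simpl. destruct (Nat.eq_dec i (S n)) as [->|Hne].
    + assert (0 <= sum_f_R0 f n). { apply cond_pos_sum. auto. } lra.
    + specialize (IHn ltac:(lia)). specialize (Hf (S n)). lra.
Qed.

Lemma sum_le_const (f : nat -> R) n M : (forall j, (j <= n)%nat -> f j <= M) -> sum_f_R0 f n <= INR (S n) * M.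
Proof.
  intros Hf. induction n.
  - simpl. specialize (Hf 0%nat ltac:(lia)). lra.
  - simpl sum_f_R0. rewrite S_INR. rewrite Rmult_plus_distr_r.
    assert (sum_f_R0 f n <= INR (S n) * M) by (apply IHn; intros; apply Hf; lia).
    specialize (Hf (S n) ltac:(lia)). lra.
Qed.

Lemma binom_sum N k : (k <= N)%nat -> INR N ^ N = sum_f_R0 (Tb N k) N.
Proof.
  intros H. unfold Tb. rewrite <- binomial. f_equal. rewrite <- plus_INR. f_equal. lia.
Qed.

Lemma C_upper0 N k : (k <= N)%nat -> Tb N k k <= INR N ^ N.
Proof.
  intros H. rewrite (binom_sum N k H). apply sum_le_single; auto. apply T_nonneg.
Qed.

Lemma C_lower0 N k : (k <= N)%nat -> INR N ^ N <= INR (S N) * Tb N k k.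
Proof.
  intros H. rewrite (binom_sum N k H). apply sum_le_const. intros. apply T_max; auto.
Qed.


Lemma pow_self n : INR n ^ n = exp (L (INR n)).
Proof.
  destruct n as [|n].
  - simpl. unfold L. rewrite Rmult_0_l, exp_0. reflexivity.
  - unfold L. assert (0 < INR (S n)) by (apply lt_0_INR; lia).
    rewrite <- ln_pow by auto. rewrite exp_ln. reflexivity. apply pow_lt; auto.
Qed.

Lemma C_upper N k : (k <= N)%nat ->
  Binomial.C N k <= exp (L (INR N) - L (INR k) - L (INR (N - k))).
Proof.
  intros H. pose proof (C_upper0 N k H). unfold Tb in H0.
  replace (N - k)%nat with (N - k)%nat in H0 by reflexivity.
  rewrite !pow_self in H0. unfold Rminus. rewrite !exp_plus, !exp_Ropp.
  pose proof (exp_pos (L (INR k))). pose proof (exp_pos (L (INR (N - k)))).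
  apply Rmult_le_reg_r with (exp (L (INR k)) * exp (L (INR (N - k)))).
  apply Rmult_lt_0_compat; auto.
  replace (exp (L (INR N)) * / exp (L (INR k)) * / exp (L (INR (N - k))) *
    (exp (L (INR k)) * exp (L (INR (N - k))))) with (exp (L (INR N))) by (field; lra).
  lra.
Qed.

Lemma C_lower N k : (k <= N)%nat ->
  exp (L (INR N) - L (INR k) - L (INR (N - k))) <= INR (S N) * Binomial.C N k.
Proof.
  intros H. pose proof (C_lower0 N k H). unfold Tb in H0.
  rewrite !pow_self in H0. unfold Rminus. rewrite !exp_plus, !exp_Ropp.
  pose proof (exp_pos (L (INR k))). pose proof (exp_pos (L (INR (N - k)))).
  apply Rmult_le_reg_r with (exp (L (INR k)) * exp (L (INR (N - k)))).
  apply Rmult_lt_0_compat; auto.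
  replace (exp (L (INR N)) * / exp (L (INR k)) * / exp (L (INR (N - k))) *
    (exp (L (INR k)) * exp (L (INR (N - k))))) with (exp (L (INR N))) by (field; lra).
  lra.
Qed.
Lemma ln_le' x y : 0 < x -> x <= y -> ln x <= ln y.
Proof. intros. destruct (Req_dec x y) as [->|]; [lra|]. left; apply ln_increasing; lra. Qed.

Lemma ln_le_sub1 z : 0 < z -> ln z <= z - 1.
Proof. intros H. pose proof (exp_ineq1_le (ln z)). rewrite exp_ln in H0; lra. Qed.

Lemma ln_nonpos z : 0 < z -> z <= 1 -> ln z <= 0.
Proof. intros. rewrite <- ln_1. apply ln_le'; lra. Qed.
Lemma ln_nonneg z : 1 <= z -> 0 <= ln z.
Proof. intros. rewrite <- ln_1. apply ln_le'; lra. Qed.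

Lemma L_ge z : 0 <= z -> -1 <= L z.
Proof.
  intros H. unfold L. destruct (Req_dec z 0) as [->|Hz]; [lra|].
  assert (0 < /z) by (apply Rinv_0_lt_compat; lra).
  pose proof (ln_le_sub1 (/z) H0). rewrite ln_Rinv in H1 by lra.
  assert (z * (- ln z) <= z * (/z - 1)) by (apply Rmult_le_compat_l; lra).
  replace (z * (/z - 1)) with (1 - z) in H2 by (field; lra). nra.
Qed.

Lemma L_le0 z : 0 <= z <= 1 -> L z <= 0.
Proof.
  intros H. unfold L. destruct (Req_dec z 0) as [->|Hz]; [lra|].
  pose proof (ln_nonpos z ltac:(lra) ltac:(lra)). nra.
Qed.

Lemma L_diff1 x y M d : 0 <= x -> x <= y -> y <= M -> 1 <= M -> y - x <= d ->
  -1 <= L y - L x <= d * (ln M + 1).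
Proof.
  intros Hx Hxy HyM HM Hd. pose proof (ln_nonneg M HM).
  split.
  - destruct (Rle_dec 1 x).
    + unfold L. pose proof (ln_nonneg x r). assert (ln x <= ln y) by (apply ln_le'; lra). nra.
    + pose proof (L_le0 x ltac:(lra)). pose proof (L_ge y ltac:(lra)). lra.
  - destruct (Req_dec x 0) as [->|Hx0].
    + unfold L. rewrite Rmult_0_l. destruct (Rle_dec y 1).
      * destruct (Req_dec y 0) as [->|]; [nra|].
        pose proof (ln_nonpos y ltac:(lra) r). nra.
      * assert (ln y <= ln M) by (apply ln_le'; lra). nra.
    + unfold L. destruct (Req_dec y x) as [->|Hyx]; [nra|].
      assert (ln y - ln x <= y / x - 1).
      { replace (ln y - ln x) with (ln (y / x)).
        apply ln_le_sub1. apply Rdiv_lt_0_compat; lra.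
        unfold Rdiv. rewrite ln_mult, ln_Rinv; try lra. apply Rinv_0_lt_compat; lra. }
      assert (x * (ln y - ln x) <= y - x).
      { replace (y - x) with (x * (y / x - 1)) by (field; lra). apply Rmult_le_compat_l; lra. }
      assert (ln y <= ln M) by (apply ln_le'; lra).
      assert ((y - x) * ln y <= d * ln M).
      { destruct (Rle_dec 0 (ln y)). 
        - apply Rle_trans with ((y-x) * ln M). apply Rmult_le_compat_l; lra.
          apply Rmult_le_compat_r; lra.
        - nra. }
      nra.
Qed.

Lemma L_diff x y M d : 0 <= x -> 0 <= y -> x <= M -> y <= M -> 1 <= M -> Rabs (x - y) <= d ->
  Rabs (L x - L y) <= d * (ln M + 1) + 1.
Proof.
  intros. pose proof (ln_nonneg M H3). pose proof (Rabs_pos (x - y)).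
  destruct (Rle_dec x y).
  - rewrite Rabs_left1 in H4 by lra.
    pose proof (L_diff1 x y M d H r H2 H3 ltac:(lra)).
    apply Rabs_le. nra.
  - rewrite Rabs_right in H4 by lra.
    pose proof (L_diff1 y x M d H0 ltac:(lra) H1 H3 ltac:(lra)).
    apply Rabs_le. nra.
Qed.

Lemma L_scale lam z : 0 < lam -> 0 <= z -> L (lam * z) = lam * L z + lam * z * ln lam.
Proof.
  intros. unfold L. destruct (Req_dec z 0) as [->|]; [ring|].
  rewrite ln_mult by lra. ring.
Qed.

Lemma nfl_spec r : 0 <= r -> INR (Defs.nfloor r) <= r < INR (Defs.nfloor r) + 1.
Proof.
  intros H. unfold Defs.nfloor. destruct (base_Int_part r) as [H1 H2].
  assert (0 <= Int_part r)%Z.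
  { assert (IZR (Int_part r) > -1) by lra.
    assert (-1 < Int_part r)%Z by (apply lt_IZR; lra). lia. }
  rewrite INR_IZR_INZ, Z2Nat.id by auto. lra.
Qed.

Lemma nfl_mono r t : 0 <= r -> r <= t -> (Defs.nfloor r <= Defs.nfloor t)%nat.
Proof.
  intros H1 H2. pose proof (nfl_spec r H1). pose proof (nfl_spec t ltac:(lra)).
  assert (INR (Defs.nfloor r) < INR (Defs.nfloor t) + 1) by lra.
  rewrite <- S_INR in H3. apply INR_lt in H3. lia.
Qed.

Lemma approx u v n : 1 <= n -> 0 <= u <= n -> 0 <= v <= n -> Rabs (u - v) <= 2 ->
  L u <= L v + (2*ln n + 3) /\ L v <= L u + (2*ln n + 3).
Proof.
  intros. pose proof (L_diff u v n 2 ltac:(lra) ltac:(lra) ltac:(lra) ltac:(lra) H H2).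
  apply Rabs_le_between in H3. lra.
Qed.

Lemma yy_range s : 0 <= s <= 1 -> 1/12 <= yy s <= 5/12.
Proof.
  intros Hs. pose proof kk_bounds. unfold yy.
  assert (kk*(s-1/2) >= -(2/3)*(1/2)).
  { destruct (Rle_dec s (1/2)). nra. nra. }
  assert (kk*(s-1/2) <= (2/3)*(1/2)).
  { destruct (Rle_dec s (1/2)). nra. nra. }
  lra.
Qed.

Lemma Psi_flip s : Psi (1 - s) = L (1 - s/2) - L (1 - s/2 - yy s) - L (1/2) + L (1/2 - yy s).
Proof.
  unfold Psi.
  replace (yy (1 - s)) with (1/2 - yy s) by (unfold yy; field).
  replace ((1 + (1 - s)) / 2) with (1 - s/2) by field.
  replace (1 / 2 - yy s + (1 - s) / 2) with (1 - s/2 - yy s) by field.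
  ring.
Qed.

Lemma h_quarter : (1 - h (1/4)) * ln 2 = K0.
Proof.
  unfold h, K0, log2.
  destruct (Req_EM_T (1/4) 0); [lra|]. destruct (Req_EM_T (1/4) 1); [lra|].
  replace (1 - 1/4) with (3/4) by lra.
  rewrite ln_3q, ln_quarter. pose proof ln2_pos. field. lra.
Qed.

Lemma exp_le' x y : x <= y -> exp x <= exp y.
Proof. intros. destruct (Req_dec x y) as [->|]; [lra|]. left; apply exp_increasing; lra. Qed.

Lemma final_num nr : 100 <= nr -> ln 2 + 18 <= 7 * ln nr.
Proof.
  intros H.
  assert (E1 : exp 1 <= 3) by apply exp_le_3.
  assert (E2 : 2 < exp 1) by (pose proof (exp_ineq1 1 ltac:(lra)); lra).
  assert (ln 2 < 1). { rewrite <- (ln_exp 1). apply ln_increasing; lra. }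
  assert (exp 3 <= 27).
  { replace 3 with (1 + 1 + 1) by lra. rewrite !exp_plus.
    pose proof (exp_pos 1).
    assert (exp 1 * exp 1 <= 9) by nra. nra. }
  assert (3 <= ln nr). { rewrite <- (ln_exp 3). apply ln_le'. apply exp_pos. lra. }
  lra.
Qed.

Lemma main_bound (n : nat) (s : R) : (100 <= n)%nat -> 0 <= s <= 1 ->
  (binomn (1 - s/2) (s/2 + yy s - s/2) n + binomn (1 - (1 - s)/2) (s/2 + yy s) n)
    / binomn (1/2) (s/2 + yy s - s/2) n
  <= Rpower 2 (INR n * (1 - h (1/4))) * Rpower (INR n) 20.
Proof.
  intros Hn Hs. pose proof (yy_range s Hs) as Hy.
  pose proof (Psi_le s Hs) as HP1. pose proof (Psi_le (1 - s) ltac:(lra)) as HP2.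
  rewrite Psi_flip in HP2.
  set (y := yy s) in *.
  assert (Hnr : 100 <= INR n).
  { apply le_INR in Hn. replace (INR 100) with 100 in Hn. lra.
    rewrite INR_IZR_INZ. reflexivity. }
  set (nr := INR n) in *.
  unfold binomn. fold nr.
  replace ((s/2 + y - s/2) * nr) with (y * nr) by ring.
  set (a := Defs.nfloor ((1 - s/2) * nr)).
  set (j := Defs.nfloor (y * nr)).
  set (b := Defs.nfloor ((1 - (1-s)/2) * nr)).
  set (j' := Defs.nfloor ((s/2+y) * nr)).
  set (d := Defs.nfloor (1/2 * nr)).
  assert (Sa := nfl_spec ((1 - s/2) * nr) ltac:(nra)). fold a in Sa.
  assert (Sj := nfl_spec (y * nr) ltac:(nra)). fold j in Sj.
  assert (Sb := nfl_spec ((1 - (1-s)/2) * nr) ltac:(nra)). fold b in Sb.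
  assert (Sj' := nfl_spec ((s/2+y) * nr) ltac:(nra)). fold j' in Sj'.
  assert (Sd := nfl_spec (1/2 * nr) ltac:(nra)). fold d in Sd.
  assert (Hja : (j <= a)%nat) by (apply nfl_mono; nra).
  assert (Hjd : (j <= d)%nat) by (apply nfl_mono; nra).
  assert (Hjb : (j' <= b)%nat) by (apply nfl_mono; nra).
  pose proof (C_upper a j Hja) as Ca.
  pose proof (C_upper b j' Hjb) as Cb.
  pose proof (C_lower d j Hjd) as Cd.
  rewrite minus_INR in Ca, Cb, Cd by auto.
  pose proof (pos_INR j). pose proof (pos_INR j').
  set (A := 2 * ln nr + 3).
  assert (H1 : 1 <= nr) by lra.
  destruct (approx (INR a) (nr * (1 - s/2)) nr H1 ltac:(nra) ltac:(nra)) as [a1 a2].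
  { apply Rabs_le. nra. }
  destruct (approx (INR a - INR j) (nr * (1 - s/2 - y)) nr H1 ltac:(nra) ltac:(nra)) as [b1 b2].
  { apply Rabs_le. nra. }
  destruct (approx (INR d) (nr * (1/2)) nr H1 ltac:(nra) ltac:(nra)) as [c1 c2].
  { apply Rabs_le. nra. }
  destruct (approx (INR d - INR j) (nr * (1/2 - y)) nr H1 ltac:(nra) ltac:(nra)) as [d1 d2].
  { apply Rabs_le. nra. }
  destruct (approx (INR b) (nr * ((1 + s)/2)) nr H1 ltac:(nra) ltac:(nra)) as [e1 e2].
  { apply Rabs_le. nra. }
  destruct (approx (INR j') (nr * (y + s/2)) nr H1 ltac:(nra) ltac:(nra)) as [f1 f2].
  { apply Rabs_le. nra. }
  destruct (approx (INR b - INR j') (nr * (1/2 - y)) nr H1 ltac:(nra) ltac:(nra)) as [g1 g2].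
  { apply Rabs_le. nra. }
  destruct (approx (INR j) (nr * y) nr H1 ltac:(nra) ltac:(nra)) as [i1 i2].
  { apply Rabs_le. nra. }
  fold A in a1, a2, b1, b2, c1, c2, d1, d2, e1, e2, f1, f2, g1, g2, i1, i2.
  assert (Hnr0 : 0 < nr) by lra.
  assert (R1 : L (nr * (1 - s/2)) - L (nr * (1 - s/2 - y)) - L (nr * (1/2)) + L (nr * (1/2 - y))
     = nr * (L (1 - s/2) - L (1 - s/2 - y) - L (1/2) + L (1/2 - y))).
  { rewrite !L_scale by lra. ring. }
  assert (R2 : L (nr * ((1 + s)/2)) - L (nr * (y + s/2)) - L (nr * (1/2)) + L (nr * y)
     = nr * Psi s).
  { unfold Psi. fold y. rewrite !L_scale by lra. field. }
  set (B := nr * K0 + 6 * A).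
  set (Ed := L (INR d) - L (INR j) - L (INR d - INR j)).
  assert (HE1 : L (INR a) - L (INR j) - L (INR a - INR j) <= Ed + B).
  { unfold Ed, B. assert (nr * (L (1 - s/2) - L (1 - s/2 - y) - L (1/2) + L (1/2 - y)) <= nr * K0)
      by (apply Rmult_le_compat_l; lra).
    assert (0 <= A). { unfold A. pose proof (ln_nonneg nr ltac:(lra)). lra. }
    lra. }
  assert (HE2 : L (INR b) - L (INR j') - L (INR b - INR j') <= Ed + B).
  { unfold Ed, B. assert (nr * Psi s <= nr * K0) by (apply Rmult_le_compat_l; lra).
    lra. }
  fold Ed in Cd.
  set (Ca0 := Binomial.C a j) in *. set (Cb0 := Binomial.C b j') in *.
  set (Cd0 := Binomial.C d j) in *.
  assert (Cdpos : 0 < Cd0) by apply C_pos.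
  assert (X1 : Ca0 <= INR (S d) * Cd0 * exp B).
  { apply Rle_trans with (exp (Ed + B)). apply Rle_trans with (1 := Ca).
    apply exp_le'; lra. rewrite exp_plus.
    pose proof (exp_pos B). nra. }
  assert (X2 : Cb0 <= INR (S d) * Cd0 * exp B).
  { apply Rle_trans with (exp (Ed + B)). apply Rle_trans with (1 := Cb).
    apply exp_le'; lra. rewrite exp_plus.
    pose proof (exp_pos B). nra. }
  assert (Hd1 : INR (S d) <= nr) by (rewrite S_INR; lra).
  assert (X3 : (Ca0 + Cb0) / Cd0 <= 2 * nr * exp B).
  { apply Rle_trans with ((2 * INR (S d) * exp B * Cd0) / Cd0).
    - unfold Rdiv. apply Rmult_le_compat_r. left; apply Rinv_0_lt_compat; lra. lra.
    - replace (2 * INR (S d) * exp B * Cd0 / Cd0) with (2 * INR (S d) * exp B) by (field; lra).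
      pose proof (exp_pos B). nra. }
  apply Rle_trans with (1 := X3).
  unfold Rpower. rewrite <- exp_plus.
  replace (nr * (1 - h (1/4)) * ln 2) with (nr * K0) by (rewrite <- h_quarter; ring).
  replace (2 * nr * exp B) with (exp (ln 2 + ln nr + B)).
  2:{ rewrite !exp_plus, !exp_ln by lra. ring. }
  apply exp_le'. unfold B, A. pose proof (final_num nr Hnr). lra.
Qed.

Theorem mainTheorem13 :
  exists c : R, 0 < c /\
  exists N : nat, forall n : nat, (N <= n)%nat ->
  forall sigma : R, 0 <= sigma <= 1 ->
  exists x : R,
    0 <= x - sigma / 2 <= 1 / 2 /\
    0 <= x <= 1 - (1 - sigma) / 2 /\
    (binomn (1 - sigma / 2) (x - sigma / 2) n + binomn (1 - (1 - sigma) / 2) x n)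
      / binomn (1 / 2) (x - sigma / 2) n
    <= Rpower 2 (INR n * (1 - h (1 / 4))) * Rpower (INR n) c.
Proof.
  exists 20. split; [lra|]. exists 100%nat. intros n Hn s Hs.
  exists (s/2 + yy s). pose proof (yy_range s Hs).
  split; [lra|]. split; [lra|].
  apply main_bound; auto.
Qed.
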